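(* Let $G$ be a non-trivial graph with $m$ edges and maximum degree $\Delta$, and let $\mathcal{L}(G)$ be its line graph. Then $$ GA_1(G) + GA_1(\mathcal{L}(G)) \le \frac{1}{2}\, \max \big\{2\Delta^2 +m^2 +(6-2\Delta) m - 2\Delta -4\,,\; 2\Delta^2 +m^2 +(4-2\Delta) m + 4 \,,\; m(m-1) \big\} . $$
   Context: All graphs are finite and simple. A graph is non-trivial if each of its connected components has at least two edges. $d_u$ is the degree of $u$. The geometric-arithmetic index is $GA_1(G)=\sum_{uv\in E(G)}\frac{\sqrt{d_ud_v}}{\frac12(d_u+d_v)}$. The line graph $\mathcal{L}(G)$ has vertex set $E(G)$, two vertices being adjacent iff the corresponding edges share an end vertex in $G$. *)

(* Defs.v *)
From HB Require Import structures.
From mathcomp Require Import all_boot all_order all_algebra.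
Set Implicit Arguments. Unset Strict Implicit. Unset Printing Implicit Defensive.
Import Order.TTheory GRing.Theory Num.Theory.

Definition simple_graph (T : finType) (e : rel T) : Prop :=
  symmetric e /\ irreflexive e.

Definition edges (T : finType) (e : rel T) : {set {set T}} :=
  [set A : {set T} | [exists x, exists y, e x y && (A == [set x; y])]].

Definition nedges (T : finType) (e : rel T) : nat := #|edges e|.

Definition deg (T : finType) (e : rel T) (u : T) : nat := #|[set v | e u v]|.

Definition maxdeg (T : finType) (e : rel T) : nat := \max_(v : T) deg e v.

Definition component (T : finType) (e : rel T) (v : T) : {set T} :=
  [set w | connect e v w].

Definition nontrivial (T : finType) (e : rel T) : Prop :=
  forall v : T, 2 <= #|[set A in edges e | A \subset component e v]|.

Definition GA1 (R : rcfType) (T : finType) (e : rel T) : R :=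
  \sum_(A in edges e)
     Num.sqrt ((\prod_(x in A) deg e x)%:R) /
     ((\sum_(x in A) deg e x)%:R / 2%:R).

Definition line_vertex (T : finType) (e : rel T) : finType :=
  {A : {set T} | A \in edges e}.

Definition line_rel (T : finType) (e : rel T) : rel (line_vertex e) :=
  fun A B => (val A != val B) && (val A :&: val B != set0).
Arguments line_rel {T} e.

(* Main.v *)
Require Import Defs.
From HB Require Import structures.
From mathcomp Require Import all_boot all_order all_algebra.
From mathcomp Require Import ring lra zify.
Import Order.TTheory GRing.Theory Num.Theory.

Lemma handshake (T : finType) (e : rel T) : symmetric e -> irreflexive e ->
  2 * #|edges e| <= \sum_v deg e v.
Proof.
move=> sym irr.
rewrite -sum1_card big_distrr /=.
apply: (@leq_trans (\sum_(A in edges e) \sum_(p : T * T) (e p.1 p.2 && (A == [set p.1; p.2])))).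
  apply: leq_sum => A; rewrite inE => /existsP[x /existsP[y /andP[exy /eqP ->]]].
  have xy : x != y by apply/eqP => h; move: exy; rewrite h irr.
  rewrite muln1 (bigD1 (x, y)) //= exy eqxx (bigD1 (y, x)) /=; last first.
    by rewrite xpair_eqE negb_and eq_sym xy.
  by rewrite sym exy setUC eqxx /= addnA leq_addr.
rewrite exchange_big /= -(pair_bigA _ (fun v w => \sum_(A in edges e) (e v w && (A == [set v; w])))) /=.
apply: leq_sum => v _.
rewrite /deg -sum1_card [X in _ <= X]big_mkcond /=.
apply: leq_sum => w _; rewrite inE.
case: (e v w) => /=; last by rewrite big1.
set S := [set v; w].
case: (boolP (S \in edges e)) => hS.
  by rewrite (bigD1 S) //= eqxx big1 // => A /andP[_ /negbTE ->].
by rewrite big1 // => A hA; apply/eqP; rewrite eqb0; apply/eqP => h; move: hS; rewrite -h hA.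
Qed.

Section Comb.
Variables (T : finType) (e : rel T).
Hypothesis sym : symmetric e.
Hypothesis irr : irreflexive e.

Lemma cardLV : #|{: line_vertex e}| = nedges e.
Proof. by rewrite card_sig /nedges; apply: eq_card => A; rewrite !inE. Qed.

Lemma card_val (P : pred {set T}) :
  #|[set g : line_vertex e | P (val g)]| = #|[set A in edges e | P A]|.
Proof.
rewrite -(card_imset _ val_inj); apply: eq_card => A.
rewrite [RHS]inE.
apply/imsetP/andP => [[g]|[hA hP]].
  by rewrite inE => hg ->; split => //; exact: (valP g).
by exists (Sub A hA) => //; rewrite inE SubK.
Qed.

Lemma edge_neq0 (f : line_vertex e) : val f != set0.
Proof.
case: f => A /=; rewrite inE => /existsP[x /existsP[y /andP[_ /eqP ->]]].
by apply/set0Pn; exists x; rewrite !inE eqxx.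
Qed.

Lemma degL_bound (f : line_vertex e) (Q : pred (line_vertex e)) :
  (forall g, Q g -> val f :&: val g == set0) ->
  deg (line_rel e) f + #|[set g | Q g]| <= nedges e - 1.
Proof.
move=> hQ.
set A := [set g | line_rel e f g]; set B := [set g | Q g].
have dis : A :&: B = set0.
  apply/setP => g; rewrite !inE /line_rel; apply/negbTE.
  by apply/negP => /andP[/andP[_ h1] /hQ h2]; rewrite h2 in h1.
have -> : deg (line_rel e) f = #|A| by [].
have -> : #|A| + #|B| = #|A :|: B| by rewrite cardsU dis cards0 subn0.
have sub : A :|: B \subset [set~ f].
  apply/subsetP => g; rewrite !inE => /orP[/andP[h _]|/hQ h].
    by apply: contraNneq h => ->.
  apply/eqP => hg; move: h; rewrite hg setIid => /eqP h; move: (edge_neq0 f).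
  by rewrite h eqxx.
apply: (leq_trans (subset_leq_card sub)).
by rewrite cardsC1 -cardLV subn1.
Qed.

Lemma sum_degL :
  2 * #|edges (line_rel e)| <= nedges e * (nedges e - 1).
Proof.
have sL : symmetric (line_rel e).
  by move=> f g; rewrite /line_rel eq_sym setIC.
have iL : irreflexive (line_rel e) by move=> f; rewrite /line_rel eqxx.
apply: (leq_trans (handshake _ _ sL iL)).
rewrite -cardLV -sum_nat_const cardLV.
apply: leq_sum => f _.
have := @degL_bound f pred0 (fun g (h : false) => False_ind _ (notF h)).
by move/(leq_trans _); apply; rewrite leq_addr.
Qed.

Lemma sumb_card (I : finType) (P : pred I) : \sum_i (P i : nat) = #|[set i | P i]|.
Proof. by rewrite -sum1_card [RHS]big_mkcond; apply: eq_bigr => i _; rewrite inE; case: (P i). Qed.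

Variable v : T.
Definition Q1 (f g : line_vertex e) : bool :=
  (v \notin val f) && (v \in val g) && (val f :&: val g == set0).

Lemma edge2 (A : {set T}) : A \in edges e -> exists x y, [/\ e x y, x != y & A = [set x; y]].
Proof.
rewrite inE => /existsP[x /existsP[y /andP[exy /eqP ->]]].
exists x, y; split => //; apply/eqP => h; move: exy; by rewrite h irr.
Qed.

Lemma v_edge u : e v u -> [set v; u] \in edges e.
Proof. by move=> h; rewrite inE; apply/existsP; exists v; apply/existsP; exists u; rewrite h eqxx. Qed.

Lemma v_inj : {in [set u | e v u] &, injective (fun u => [set v; u])}.
Proof.
move=> u u'; rewrite !inE => hu hu' h.
have : u \in [set v; u'] by rewrite -h !inE eqxx orbT.
rewrite !inE => /orP[/eqP huv|/eqP //].
by move: hu; rewrite huv irr.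
Qed.

Lemma Xbound : nedges e <= #|[set f : line_vertex e | v \notin val f]| + deg e v.
Proof.
rewrite -cardLV -(cardsC [set f : line_vertex e | v \notin val f]) leq_add2l.
apply: (@leq_trans #|[set f : line_vertex e | v \in val f]|).
  by apply: subset_leq_card; apply/subsetP => g; rewrite !inE negbK.
rewrite (card_val (fun A => v \in A)).
apply: (leq_trans _ (leq_imset_card (fun u => [set v; u]) [set u | e v u])).
apply: subset_leq_card; apply/subsetP => A; rewrite inE => /andP[/edge2[x [y [exy _ ->]]]].
rewrite !inE => /orP[/eqP ->|/eqP ->]; apply/imsetP.
  by exists y; rewrite ?inE.
exists x; first by rewrite inE sym.
by rewrite setUC.
Qed.

Lemma refined :
  2 * #|edges (line_rel e)| +
  2 * (#|[set f : line_vertex e | v \notin val f]| * (deg e v - 2))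
  <= nedges e * (nedges e - 1).
Proof.
have sL : symmetric (line_rel e).
  by move=> f g; rewrite /line_rel eq_sym setIC.
have iL : irreflexive (line_rel e) by move=> f; rewrite /line_rel eqxx.
apply: (@leq_trans (\sum_(f : line_vertex e) (deg (line_rel e) f + #|[set g | Q1 f g || Q1 g f]|))); last first.
  rewrite -cardLV -sum_nat_const cardLV; apply: leq_sum => f _.
  apply: degL_bound => g /orP[/andP[_ h]|/andP[_ h]] //; by rewrite setIC.
rewrite big_split /=; apply: leq_add; first exact: handshake.
have e1 f : #|[set g | Q1 f g || Q1 g f]| = \sum_g (Q1 f g : nat) + \sum_g (Q1 g f : nat).
  rewrite -sumb_card -big_split; apply: eq_bigr => g _ /=.
  rewrite /Q1; case: (v \in val g); rewrite ?andbF ?andbT //=.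
  by case: (_ && _).
rewrite (eq_bigr _ (fun f _ => e1 f)) big_split /= [X in _ + X]exchange_big /= addnn -mul2n leq_mul2l /=.
rewrite -sum_nat_const big_mkcond /=; apply: leq_sum => f _; rewrite inE.
case: ifP => hf //.
rewrite sumb_card (card_val (fun A => (v \notin val f) && (v \in A) && (val f :&: A == set0))).
set N := [set u | e v u].
have hc : deg e v - 2 <= #|N :\: val f|.
  rewrite cardsD; apply: leq_sub2l.
  have [x [y [_ _ ->]]] := @edge2 _ (valP f).
  by apply: (leq_trans (subset_leq_card (subsetIr _ _))); rewrite cards2; case: (_ != _).
apply: (leq_trans hc).
rewrite -(card_in_imset (f := fun u => [set v; u])); last first.
  by move=> u u' /setDP[hu _] /setDP[hu' _]; apply: v_inj.
apply: subset_leq_card; apply/subsetP => A /imsetP[u /setDP[hu hnu] ->].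
rewrite inE in hu.
rewrite inE v_edge //= hf !inE eqxx /=.
apply/eqP/setP => z; rewrite !inE.
case: (eqVneq z v) => [->|_]; first by rewrite (negbTE hf).
case: (eqVneq z u) => [->|_]; first by rewrite (negbTE hnu).
by rewrite andbF.
Qed.
End Comb.

Local Open Scope ring_scope.

Lemma term_le1 (R : rcfType) (a b : nat) :
  Num.sqrt ((a * b)%N%:R : R) / ((a + b)%N%:R / 2%:R) <= 1.
Proof.
have [->|ab] := eqVneq (a + b)%N 0%N.
  by rewrite mul0r invr0 mulr0 ler01.
have h2 : (0:R) < 2%:R by rewrite ltr0n.
have hp : (0:R) < (a + b)%N%:R / 2%:R.
  by rewrite divr_gt0 // ltr0n lt0n.
rewrite ler_pdivrMr // mul1r.
rewrite -[X in _ <= X](ger0_norm (ltW hp)) -sqrtr_sqr. apply: ler_wsqrtr.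
have ha : (0:R) <= a%:R by rewrite ler0n.
have hb : (0:R) <= b%:R by rewrite ler0n.
rewrite expr2 mulf_div -!natrM ler_pdivlMr ?ltr0n // -!natrM ler_nat.
have [h|h] := leqP a b.
  have [k ->] : exists k, b = (a + k)%N by exists (b - a)%N; lia.
  nia.
have [k ->] : exists k, a = (b + k)%N by exists (a - b)%N; lia.
nia.
Qed.

Lemma GA_le (R : rcfType) (T : finType) (e : rel T) : irreflexive e ->
  GA1 R e <= #|edges e|%:R.
Proof.
move=> irr; rewrite /GA1 -sum1_card natr_sum.
apply: ler_sum => A; rewrite inE => /existsP[x /existsP[y /andP[exy /eqP ->]]].
have xy : x != y by apply/eqP => h; move: exy; rewrite h irr.
rewrite big_setU1 /= ?inE // big_set1 big_setU1 /= ?inE // big_set1.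
exact: term_le1.
Qed.

Theorem corollary2p2 (R : rcfType) (T : finType) (e : rel T) :
  simple_graph e -> nontrivial e ->
  let m : R := (nedges e)%:R in
  let D : R := (maxdeg e)%:R in
  GA1 R e + GA1 R (line_rel e) <=
    (Num.max (Num.max
       (2 * D ^+ 2 + m ^+ 2 + (6 - 2 * D) * m - 2 * D - 4)
       (2 * D ^+ 2 + m ^+ 2 + (4 - 2 * D) * m + 4))
       (m * (m - 1))) / 2.
Proof.
move=> [sym irr] _; cbv zeta.
have iL : irreflexive (line_rel e) by move=> f; rewrite /line_rel eqxx.
have g1 := GA_le R _ _ irr; have g2 := GA_le R _ _ iL.
apply: (le_trans (lerD g1 g2)).
rewrite ler_pdivlMr ?ltr0n //.
clear g1 g2.
set M := nedges e; set EL := #|edges (line_rel e)|.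
have eM : #|edges e| = M by [].
rewrite eM; clear eM.
have h0 := sum_degL T e; rewrite -/M -/EL in h0.
have [hD|hD] := leqP (maxdeg e) 1%N.
  rewrite le_max; apply/orP; left; rewrite le_max; apply/orP; right.
  have hn : (2 * EL + M <= M * M)%N by move: h0; rewrite mulnBr muln1; case: M => [|M'] /=; nia.
  have hr : ((2 * EL + M)%N%:R <= (M * M)%N%:R :> R) by rewrite ler_nat.
  rewrite natrD natrM !natrM in hr.
  have hM : (0:R) <= M%:R by rewrite ler0n.
  move: hD; case: (maxdeg e) => [|[|//]] _ /=; rewrite ?expr2; nra.
have [v hv] : exists v, deg e v = maxdeg e.
  case: (pickP (fun _ : T => true)) => [v0 _|hn].
    have ne : (0 < #|T|)%N by apply/card_gt0P; exists v0.
    case: (@bigop.eq_bigmax T (deg e) ne) => i hi; by exists i; rewrite /maxdeg hi.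
  by move: hD; rewrite /maxdeg big_pred0.
have h1 := refined _ _ irr v; have h2 := Xbound _ _ sym irr v.
rewrite -/M -/EL hv in h1 h2.
set X := #|_| in h1 h2.
move: hD h1 h2; case: (maxdeg e) => [//|[//|d]] _ h1 h2.
have hn : (2 * EL + 2 * X * d + M <= M * M)%N.
  move: h1; rewrite subSS ?subn0 mulnBr muln1; case: (M) => [|M'] /=; nia.
have hr : ((2 * EL + 2 * X * d + M)%N%:R <= (M * M)%N%:R :> R) by rewrite ler_nat.
have hr2 : (M%:R <= (X + d.+2)%N%:R :> R) by rewrite ler_nat.
rewrite !natrD !natrM in hr hr2.
have hd : (0:R) <= d%:R by rewrite ler0n.
have ed : (d.+2)%:R = d%:R + 2 :> R by rewrite -addn2 natrD.
have hM : (0:R) <= M%:R by rewrite ler0n.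
have hX : (0:R) <= X%:R by rewrite ler0n.
have hint : 0 <= (X%:R - (M%:R - d%:R - 2)) * d%:R :> R.
  by apply: mulr_ge0 => //; rewrite ed in hr2; lra.
rewrite le_max; apply/orP; left; rewrite le_max; apply/orP; left.
rewrite ed; rewrite !expr2; nra.
Qed.
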